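(* Let $X$ be a Banach space and $f:X\to\mathbb R\cup\{+\infty\}$ a proper lower semicontinuous convex function with $S=\{x:f(x)\le0\}\ne\emptyset$. Let $K_f$ be the infimum of $K\ge 0$ such that $d(x,S)\le K\,(f(x))^+$ for all $x\in X$ ($K_f=+\infty$ if none). Then $$K_f^{-1}=\inf\Big\{\sup_{\|h\|\le1}\big(-f'(x;h)\big):\ 0<f(x)<\infty\Big\},$$ with conventions $1/0=\infty$, $1/\infty=0$, $\inf\emptyset=+\infty$.
   Context: $f'(x;h)=\lim_{t\downarrow0}t^{-1}(f(x+th)-f(x))\in[-\infty,+\infty]$ is the directional derivative of the convex function $f$ at $x\in\operatorname{dom}f$. *)

(* Defs.v *)
From Stdlib Require Import Reals Lra ClassicalEpsilon.
Open Scope R_scope.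

Inductive ERbar : Type := Fin (r : R) | PInf | MInf.

Definition ER_le (a b : ERbar) : Prop :=
  match a, b with
  | MInf, _ => True
  | _, PInf => True
  | Fin x, Fin y => x <= y
  | _, _ => False
  end.

Definition ER_lt (a b : ERbar) : Prop := ER_le a b /\ a <> b.

Definition ER_opp (a : ERbar) : ERbar :=
  match a with Fin x => Fin (- x) | PInf => MInf | MInf => PInf end.

(** inverse on [0,+oo] with 1/0 = +oo, 1/+oo = 0 (only applied to values in [0,+oo]) *)
Definition ER_inv (a : ERbar) : ERbar :=
  match a with
  | Fin x => if Req_EM_T x 0 then PInf else Fin (/ x)
  | PInf => Fin 0
  | MInf => Fin 0
  end.

Definition is_ER_glb (A : ERbar -> Prop) (m : ERbar) : Prop :=
  (forall a, A a -> ER_le m a) /\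
  (forall m', (forall a, A a -> ER_le m' a) -> ER_le m' m).

Definition is_ER_lub (A : ERbar -> Prop) (m : ERbar) : Prop :=
  (forall a, A a -> ER_le a m) /\
  (forall m', (forall a, A a -> ER_le a m') -> ER_le m m').

(** infimum / supremum in [-oo,+oo] (inf of the empty set is +oo) *)
Definition ER_inf (A : ERbar -> Prop) : ERbar :=
  epsilon (inhabits PInf) (is_ER_glb A).
Definition ER_sup (A : ERbar -> Prop) : ERbar :=
  epsilon (inhabits MInf) (is_ER_lub A).

Record BanachSpace : Type := {
  bs_car :> Type;
  bs_zero : bs_car;
  bs_add : bs_car -> bs_car -> bs_car;
  bs_opp : bs_car -> bs_car;
  bs_scal : R -> bs_car -> bs_car;
  bs_norm : bs_car -> R;
  bs_add_assoc : forall x y z, bs_add x (bs_add y z) = bs_add (bs_add x y) z;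
  bs_add_comm : forall x y, bs_add x y = bs_add y x;
  bs_add_zero : forall x, bs_add x bs_zero = x;
  bs_add_opp : forall x, bs_add x (bs_opp x) = bs_zero;
  bs_scal_assoc : forall a b x, bs_scal a (bs_scal b x) = bs_scal (a * b) x;
  bs_scal_one : forall x, bs_scal 1 x = x;
  bs_scal_distr_l : forall a x y, bs_scal a (bs_add x y) = bs_add (bs_scal a x) (bs_scal a y);
  bs_scal_distr_r : forall a b x, bs_scal (a + b) x = bs_add (bs_scal a x) (bs_scal b x);
  bs_norm_eq0 : forall x, bs_norm x = 0 -> x = bs_zero;
  bs_norm_scal : forall a x, bs_norm (bs_scal a x) = Rabs a * bs_norm x;
  bs_norm_triangle : forall x y, bs_norm (bs_add x y) <= bs_norm x + bs_norm y;
  bs_complete : forall u : nat -> bs_car,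
    (forall eps, 0 < eps -> exists N, forall m n, (N <= m)%nat -> (N <= n)%nat ->
        bs_norm (bs_add (u m) (bs_opp (u n))) < eps) ->
    exists l, forall eps, 0 < eps -> exists N, forall n, (N <= n)%nat ->
        bs_norm (bs_add (u n) (bs_opp l)) < eps
}.

Arguments bs_zero {_}.
Arguments bs_add {_}.
Arguments bs_opp {_}.
Arguments bs_scal {_}.
Arguments bs_norm {_}.

Definition bs_sub {X : BanachSpace} (x y : X) : X := bs_add x (bs_opp y).

(** Functions X -> R ∪ {+oo}: [None] stands for +oo. *)
Definition ext (o : option R) : ERbar :=
  match o with Some r => Fin r | None => PInf end.

Definition proper_fun {X : BanachSpace} (f : X -> option R) : Prop :=
  exists x, exists r, f x = Some r.

Definition lsc {X : BanachSpace} (f : X -> option R) : Prop :=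
  forall x (t : R), ER_lt (Fin t) (ext (f x)) ->
    exists delta, 0 < delta /\
      forall y, bs_norm (bs_sub y x) < delta -> ER_lt (Fin t) (ext (f y)).

Definition convex_fun {X : BanachSpace} (f : X -> option R) : Prop :=
  forall x y (fx fy l : R), f x = Some fx -> f y = Some fy -> 0 <= l <= 1 ->
    ER_le (ext (f (bs_add (bs_scal l x) (bs_scal (1 - l) y))))
          (Fin (l * fx + (1 - l) * fy)).

Definition is_right_lim0 (q : R -> ERbar) (l : ERbar) : Prop :=
  match l with
  | Fin L => forall eps, 0 < eps -> exists delta, 0 < delta /\
       forall t, 0 < t < delta -> exists v, q t = Fin v /\ Rabs (v - L) < eps
  | PInf => forall M, exists delta, 0 < delta /\
       forall t, 0 < t < delta -> ER_lt (Fin M) (q t)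
  | MInf => forall M, exists delta, 0 < delta /\
       forall t, 0 < t < delta -> ER_lt (q t) (Fin M)
  end.

Definition diff_quot {X : BanachSpace} (f : X -> option R) (x h : X) (fx t : R) : ERbar :=
  match f (bs_add x (bs_scal t h)) with
  | Some v => Fin ((v - fx) / t)
  | None => PInf
  end.

(** directional derivative f'(x;h) = lim_{t↓0} (f(x+th)-f(x))/t for x ∈ dom f
    (value irrelevant outside dom f) *)
Definition dir_deriv {X : BanachSpace} (f : X -> option R) (x h : X) : ERbar :=
  match f x with
  | Some fx => epsilon (inhabits PInf) (is_right_lim0 (diff_quot f x h fx))
  | None => PInf
  end.

Definition sublevel0 {X : BanachSpace} (f : X -> option R) (x : X) : Prop :=
  exists r, f x = Some r /\ r <= 0.

Definition dist_set {X : BanachSpace} (S : X -> Prop) (x : X) : ERbar :=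
  ER_inf (fun v => exists s, S s /\ v = Fin (bs_norm (bs_sub x s))).

(** d(x,S) <= K (f x)^+ for all x (with K * (+oo) = +oo) *)
Definition error_bound_const {X : BanachSpace} (f : X -> option R) (K : R) : Prop :=
  0 <= K /\
  forall x, match f x with
            | Some v => ER_le (dist_set (sublevel0 f) x) (Fin (K * Rmax v 0))
            | None => True
            end.

Definition K_f {X : BanachSpace} (f : X -> option R) : ERbar :=
  ER_inf (fun k => exists K, k = Fin K /\ error_bound_const f K).

Definition slope_inf {X : BanachSpace} (f : X -> option R) : ERbar :=
  ER_inf (fun v => exists x r, f x = Some r /\ 0 < r /\
     v = ER_sup (fun w => exists h : X, bs_norm h <= 1 /\ w = ER_opp (dir_deriv f x h))).

(* Main.v *)
Require Import Defs.
From Stdlib Require Import Reals Lra Lia ClassicalEpsilon Classical.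
Open Scope R_scope.

Lemma ER_le_refl a : ER_le a a.
Proof. destruct a; simpl; auto; lra. Qed.

Lemma ER_le_trans a b c : ER_le a b -> ER_le b c -> ER_le a c.
Proof. destruct a, b, c; simpl; auto; try tauto; lra. Qed.

Lemma ER_le_antisym a b : ER_le a b -> ER_le b a -> a = b.
Proof. destruct a, b; simpl; try tauto; intros; f_equal; lra. Qed.

Lemma ER_le_total a b : ER_le a b \/ ER_le b a.
Proof. destruct a, b; simpl; auto. lra. Qed.

Lemma ER_not_le a b : ~ ER_le a b -> ER_le b a /\ b <> a.
Proof.
  intros H. destruct (ER_le_total a b) as [H1|H1]; [tauto|].
  split; auto. intros ->. apply H, ER_le_refl.
Qed.

Lemma ER_lt_Fin t b : ER_lt (Fin t) (Fin b) <-> t < b.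
Proof.
  unfold ER_lt; simpl; split.
  - intros [H1 H2]. destruct (Req_dec t b); [subst; tauto| lra].
  - intros; split; [lra| intros E; inversion E; lra].
Qed.

Lemma ER_lt_Fin_ext t o :
  ER_lt (Fin t) (ext o) <-> match o with Some v => t < v | None => True end.
Proof.
  destruct o; simpl. apply ER_lt_Fin. unfold ER_lt; simpl; split; auto.
  intros _; split; auto; discriminate.
Qed.

Lemma ER_le_PInf a : ER_le a PInf.
Proof. destruct a; simpl; auto. Qed.

Lemma ER_opp_le a b : ER_le a b -> ER_le (ER_opp b) (ER_opp a).
Proof. destruct a, b; simpl; auto; lra. Qed.

Lemma ER_opp_opp a : ER_opp (ER_opp a) = a.
Proof. destruct a; simpl; auto. f_equal; ring. Qed.

Lemma lub_ex (A : ERbar -> Prop) : exists m, is_ER_lub A m.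
Proof.
  destruct (classic (A PInf)) as [HP|HP].
  { exists PInf; split; [intros; apply ER_le_PInf|].
    intros m' Hm. specialize (Hm _ HP). destruct m'; simpl in *; tauto. }
  destruct (classic (exists r, A (Fin r))) as [[r0 Hr0]|Hn].
  - destruct (classic (exists M, forall r, A (Fin r) -> r <= M)) as [[M HM]|HU].
    + destruct (completeness (fun r => A (Fin r))) as [l [Hl1 Hl2]].
      { exists M; intros r Hr; apply HM; auto. }
      { exists r0; auto. }
      exists (Fin l); split.
      * intros [r| |] Ha; simpl; auto; try tauto.
      * intros [y| |] Hy; simpl; auto.
        -- apply Hl2. intros r Hr. apply (Hy _ Hr).
        -- apply (Hy _ Hr0).
    + exists PInf; split; [intros; apply ER_le_PInf|].
      intros [y| |] Hy; simpl; auto.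
      * apply HU; exists y; intros r Hr; apply (Hy _ Hr).
      * apply (Hy _ Hr0).
  - exists MInf; split.
    + intros [r| |] Ha; simpl; auto. apply Hn; eauto.
    + intros; simpl; auto.
Qed.

Lemma glb_ex (A : ERbar -> Prop) : exists m, is_ER_glb A m.
Proof.
  destruct (lub_ex (fun a => A (ER_opp a))) as [m [H1 H2]].
  exists (ER_opp m); split.
  - intros a Ha. rewrite <- (ER_opp_opp a) in Ha.
    apply H1 in Ha. apply ER_opp_le in Ha. rewrite ER_opp_opp in Ha. auto.
  - intros m' Hm'. rewrite <- (ER_opp_opp m').
    apply ER_opp_le. apply H2. intros a Ha. apply Hm' in Ha.
    apply ER_opp_le in Ha. rewrite ER_opp_opp in Ha. auto.
Qed.

Lemma ER_sup_spec A : is_ER_lub A (ER_sup A).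
Proof. unfold ER_sup. apply epsilon_spec, lub_ex. Qed.

Lemma ER_inf_spec A : is_ER_glb A (ER_inf A).
Proof. unfold ER_inf. apply epsilon_spec, glb_ex. Qed.

Lemma add0l {X : BanachSpace} (x : X) : bs_add bs_zero x = x.
Proof. rewrite bs_add_comm; apply bs_add_zero. Qed.

Lemma add_cancel {X : BanachSpace} (a b : X) : bs_add a b = a -> b = bs_zero.
Proof.
  intros H.
  assert (E: bs_add (bs_add a b) (bs_opp a) = bs_add a (bs_opp a)) by (rewrite H; auto).
  rewrite (bs_add_comm _ a b), <- bs_add_assoc, !bs_add_opp, bs_add_zero in E. exact E.
Qed.

Lemma scal0 {X : BanachSpace} (x : X) : bs_scal 0 x = bs_zero.
Proof.
  apply (add_cancel (bs_scal 0 x)). rewrite <- bs_scal_distr_r. f_equal; ring.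
Qed.

Lemma opp_unique {X : BanachSpace} (x y : X) : bs_add x y = bs_zero -> y = bs_opp x.
Proof.
  intros H. rewrite <- (bs_add_zero _ y), <- (bs_add_opp _ x), bs_add_assoc,
    (bs_add_comm _ y x), H, add0l. auto.
Qed.

Lemma opp_scal {X : BanachSpace} (x : X) : bs_opp x = bs_scal (-1) x.
Proof.
  symmetry; apply opp_unique. rewrite <- (bs_scal_one _ x) at 1.
  rewrite <- bs_scal_distr_r. replace (1 + -1) with 0 by ring. apply scal0.
Qed.

Lemma norm0 {X : BanachSpace} : bs_norm (@bs_zero X) = 0.
Proof. rewrite <- (scal0 bs_zero), bs_norm_scal, Rabs_R0. ring. Qed.

Lemma norm_opp {X : BanachSpace} (x : X) : bs_norm (bs_opp x) = bs_norm x.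
Proof. rewrite opp_scal, bs_norm_scal. rewrite Rabs_left by lra. ring. Qed.

Lemma norm_ge0 {X : BanachSpace} (x : X) : 0 <= bs_norm x.
Proof.
  pose proof (bs_norm_triangle _ x (bs_opp x)). rewrite bs_add_opp, norm0, norm_opp in H. lra.
Qed.

Lemma sub_self {X : BanachSpace} (x : X) : bs_sub x x = bs_zero.
Proof. apply bs_add_opp. Qed.

Lemma norm_sub_self {X : BanachSpace} (x : X) : bs_norm (bs_sub x x) = 0.
Proof. rewrite sub_self; apply norm0. Qed.

Lemma sub_eq0 {X : BanachSpace} (x y : X) : bs_sub x y = bs_zero -> x = y.
Proof.
  unfold bs_sub; intros H.
  rewrite <- (bs_add_zero _ x), <- (bs_add_opp _ y), (bs_add_comm _ y), bs_add_assoc, H, add0l.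
  auto.
Qed.

Lemma norm_sub_eq0 {X : BanachSpace} (x y : X) : bs_norm (bs_sub x y) = 0 -> x = y.
Proof. intros H; apply sub_eq0, bs_norm_eq0, H. Qed.

Lemma opp_add {X : BanachSpace} (x y : X) : bs_opp (bs_add x y) = bs_add (bs_opp x) (bs_opp y).
Proof. rewrite !opp_scal. apply bs_scal_distr_l. Qed.

Lemma opp_opp {X : BanachSpace} (x : X) : bs_opp (bs_opp x) = x.
Proof. rewrite !opp_scal, bs_scal_assoc. replace (-1 * -1) with 1 by ring. apply bs_scal_one. Qed.

Lemma norm_sub_sym {X : BanachSpace} (x y : X) : bs_norm (bs_sub x y) = bs_norm (bs_sub y x).
Proof.
  rewrite <- norm_opp. unfold bs_sub. rewrite opp_add, opp_opp, bs_add_comm. auto.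
Qed.

Lemma sub_chain {X : BanachSpace} (x y z : X) : bs_add (bs_sub x y) (bs_sub y z) = bs_sub x z.
Proof.
  unfold bs_sub. rewrite bs_add_assoc, <- (bs_add_assoc _ x), (bs_add_comm _ (bs_opp y)),
    bs_add_opp, bs_add_zero. auto.
Qed.

Lemma norm_sub_tri {X : BanachSpace} (x y z : X) :
  bs_norm (bs_sub x z) <= bs_norm (bs_sub x y) + bs_norm (bs_sub y z).
Proof. rewrite <- (sub_chain x y z). apply bs_norm_triangle. Qed.

Lemma add_sub_l {X : BanachSpace} (z v : X) : bs_sub (bs_add z v) z = v.
Proof.
  unfold bs_sub. rewrite (bs_add_comm _ z), <- bs_add_assoc, bs_add_opp, bs_add_zero; auto.
Qed.

Lemma add_sub_cancel {X : BanachSpace} (x s : X) : bs_add x (bs_sub s x) = s.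
Proof.
  unfold bs_sub. rewrite bs_add_assoc, (bs_add_comm _ x s), <- bs_add_assoc, bs_add_opp, bs_add_zero; auto.
Qed.

Lemma convex_comb {X : BanachSpace} (x h : X) (l t : R) :
  bs_add (bs_scal l (bs_add x (bs_scal t h))) (bs_scal (1 - l) x) = bs_add x (bs_scal (l * t) h).
Proof.
  rewrite bs_scal_distr_l, bs_scal_assoc, <- bs_add_assoc, (bs_add_comm _ (bs_scal (l*t) h)),
    bs_add_assoc, <- bs_scal_distr_r.
  replace (l + (1 - l)) with 1 by ring. rewrite bs_scal_one. auto.
Qed.

Lemma dq_notMInf {X : BanachSpace} (f : X -> option R) x h fx t :
  diff_quot f x h fx t <> MInf.
Proof. unfold diff_quot; destruct (f _); discriminate. Qed.

Lemma q_mono {X : BanachSpace} (f : X -> option R) x h fx s t :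
  convex_fun f -> f x = Some fx -> 0 < s -> s <= t ->
  ER_le (diff_quot f x h fx s) (diff_quot f x h fx t).
Proof.
  intros Hc Hx Hs Hst. unfold diff_quot at 2.
  destruct (f (bs_add x (bs_scal t h))) as [vt|] eqn:Et; [|apply ER_le_PInf].
  pose proof (Hc _ _ _ _ (s / t) Et Hx) as H.
  assert (0 <= s / t <= 1).
  { split. apply Rmult_le_pos; [lra| left; apply Rinv_0_lt_compat; lra].
    apply Rmult_le_reg_r with t; [lra|]. unfold Rdiv. rewrite Rmult_assoc, Rinv_l by lra. lra. }
  specialize (H H0). rewrite convex_comb in H.
  replace (s / t * t) with s in H by (field; lra).
  unfold diff_quot. destruct (f (bs_add x (bs_scal s h))) as [vs|]; simpl in H; [|tauto].
  simpl. unfold Rdiv.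
  apply Rmult_le_reg_r with s; [lra|].
  rewrite Rmult_assoc, Rinv_l by lra.
  apply Rle_trans with (s / t * (vt - fx)); [lra|].
  right; field; lra.
Qed.

Definition mono_pos (q : R -> ERbar) := forall s t, 0 < s -> s <= t -> ER_le (q s) (q t).

Lemma lim_exists (q : R -> ERbar) :
  mono_pos q -> (forall t, q t <> MInf) -> exists l, is_right_lim0 q l.
Proof.
  intros Hm Hn.
  destruct (ER_inf_spec (fun v => exists t, 0 < t /\ v = q t)) as [H1 H2].
  set (L := ER_inf _) in *.
  exists L. destruct L as [l| |] eqn:EL; simpl.
  - intros eps Heps.
    destruct (classic (exists t0, 0 < t0 /\ ER_lt (q t0) (Fin (l + eps)))) as [[t0 [Ht0 Hq0]]|Hno].
    + exists t0; split; auto. intros t [Ht Htt].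
      assert (Hle := Hm t t0 Ht (Rlt_le _ _ Htt)).
      assert (Hlo : ER_le (Fin l) (q t)) by (apply H1; exists t; split; auto).
      destruct (q t0) as [r| |] eqn:E0.
      2: { destruct Hq0 as [Hq0 _]; simpl in Hq0; tauto. }
      2: { exfalso; apply (Hn t0); auto. }
      apply ER_lt_Fin in Hq0.
      destruct (q t) as [v| |] eqn:Eq; simpl in *; try tauto.
      exists v; split; auto. apply Rabs_def1; lra.
    + exfalso.
      assert (ER_le (Fin (l + eps)) (Fin l)); [|simpl in *; lra].
      apply H2. intros a [t [Ht ->]].
      destruct (classic (ER_le (Fin (l+eps)) (q t))) as [|Hc]; auto.
      exfalso; apply Hno; exists t; split; auto. apply ER_not_le in Hc. exact Hc.
  - intros M. exists 1; split; [lra|]. intros t [Ht _].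
    assert (Hlo : ER_le PInf (q t)) by (apply H1; exists t; split; auto).
    destruct (q t); simpl in Hlo; try tauto. split; simpl; auto. discriminate.
  - intros M.
    destruct (classic (exists t0, 0 < t0 /\ ER_lt (q t0) (Fin M))) as [[t0 [Ht0 Hq0]]|Hno].
    + exists t0; split; auto. intros t [Ht Htt].
      assert (Hle := Hm t t0 Ht (Rlt_le _ _ Htt)).
      destruct (q t0) as [r| |] eqn:E0.
      2: { destruct Hq0 as [Hq0 _]; simpl in Hq0; tauto. }
      2: { exfalso; apply (Hn t0); auto. }
      apply ER_lt_Fin in Hq0.
      destruct (q t) as [v| |] eqn:Eq; simpl in *; try tauto.
      apply ER_lt_Fin; lra. exfalso; apply (Hn t); auto.
    + exfalso.
      assert (ER_le (Fin M) MInf); [|simpl in *; auto].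
      apply H2. intros a [t [Ht ->]].
      destruct (classic (ER_le (Fin M) (q t))) as [|Hc]; auto.
      exfalso; apply Hno; exists t; split; auto. apply ER_not_le in Hc. exact Hc.
Qed.

Lemma lim_le (q : R -> ERbar) l t :
  mono_pos q -> (forall t, q t <> MInf) -> is_right_lim0 q l -> 0 < t -> ER_le l (q t).
Proof.
  intros Hm Hn Hl Ht. destruct l as [L| |]; simpl in Hl.
  - destruct (q t) as [v| |] eqn:Eq; simpl; auto; [|exfalso; apply (Hn t); auto].
    destruct (Rle_lt_dec L v) as [|Hlt]; auto. exfalso.
    destruct (Hl (L - v)) as [d [Hd Hd2]]; [lra|].
    set (t' := Rmin t (d/2)).
    assert (0 < t' < d). { unfold t'; split; [apply Rmin_glb_lt; lra|].
      eapply Rle_lt_trans; [apply Rmin_r| lra]. }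
    destruct (Hd2 t' H) as [w [Hw1 Hw2]].
    assert (Hle := Hm t' t (proj1 H) (Rmin_l _ _)). rewrite Hw1, Eq in Hle. simpl in Hle.
    apply Rabs_def2 in Hw2. lra.
  - destruct (q t) as [v| |] eqn:Eq; simpl; auto; [|exfalso; apply (Hn t); auto].
    destruct (Hl v) as [d [Hd Hd2]].
    set (t' := Rmin t (d/2)).
    assert (0 < t' < d). { unfold t'; split; [apply Rmin_glb_lt; lra|].
      eapply Rle_lt_trans; [apply Rmin_r| lra]. }
    specialize (Hd2 t' H).
    assert (Hle := Hm t' t (proj1 H) (Rmin_l _ _)). rewrite Eq in Hle.
    destruct (q t') eqn:E'; simpl in Hle; try tauto.
    apply ER_lt_Fin in Hd2. lra. destruct Hd2 as [Hd2 _]; simpl in Hd2; auto.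
  - destruct (q t); simpl; auto.
Qed.

Lemma lim_lt (q : R -> ERbar) l a :
  is_right_lim0 q l -> ER_lt l (Fin a) ->
  exists d, 0 < d /\ forall t, 0 < t < d -> ER_lt (q t) (Fin a).
Proof.
  intros Hl Hla. destruct l as [L| |]; simpl in Hl.
  - apply ER_lt_Fin in Hla.
    destruct (Hl (a - L)) as [d [Hd Hd2]]; [lra|]. exists d; split; auto.
    intros t Ht. destruct (Hd2 t Ht) as [w [-> Hw]]. apply ER_lt_Fin.
    apply Rabs_def2 in Hw. lra.
  - destruct Hla as [Hla _]; simpl in Hla; tauto.
  - apply Hl.
Qed.

Lemma dir_deriv_spec {X : BanachSpace} (f : X -> option R) x h fx :
  convex_fun f -> f x = Some fx ->
  is_right_lim0 (diff_quot f x h fx) (dir_deriv f x h) /\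
  (forall t, 0 < t -> ER_le (dir_deriv f x h) (diff_quot f x h fx t)).
Proof.
  intros Hc Hx.
  assert (Hm : mono_pos (diff_quot f x h fx)).
  { intros s t Hs Hst. apply q_mono; auto. }
  assert (Hl : is_right_lim0 (diff_quot f x h fx) (dir_deriv f x h)).
  { unfold dir_deriv. rewrite Hx. apply epsilon_spec, lim_exists; auto.
    intros; apply dq_notMInf. }
  split; auto. intros t Ht. apply lim_le; auto. intros; apply dq_notMInf.
Qed.

Lemma near_inf {X : BanachSpace} (g : X -> option R) mu x a eps :
  (forall y b, g y = Some b -> 0 <= b) -> g x = Some a -> 0 < eps -> 0 <= mu ->
  exists y b, g y = Some b /\ b + mu * bs_norm (bs_sub y x) <= a /\
    forall y' b', g y' = Some b' -> b' + mu * bs_norm (bs_sub y' x) <= a -> b <= b' + eps.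
Proof.
  intros Hpos Hx Heps Hmu.
  set (E := fun c => exists y' b', g y' = Some b' /\ b' + mu * bs_norm (bs_sub y' x) <= a /\ c = - b').
  destruct (completeness E) as [m [Hm1 Hm2]].
  { exists 0. intros c [y' [b' [H1 [H2 ->]]]]. apply Hpos in H1. lra. }
  { exists (-a), x, a. rewrite norm_sub_self. repeat split; auto; lra. }
  destruct (classic (exists y b, g y = Some b /\ b + mu * bs_norm (bs_sub y x) <= a /\ m - eps < - b))
    as [[y [b [H1 [H2 H3]]]]|Hno].
  - exists y, b. repeat split; auto. intros y' b' H1' H2'.
    assert (- b' <= m) by (apply Hm1; exists y', b'; auto). lra.
  - exfalso. assert (m <= m - eps); [|lra]. apply Hm2.
    intros c [y' [b' [H1 [H2 ->]]]].
    destruct (Rle_lt_dec (-b') (m - eps)); auto. exfalso; apply Hno; exists y', b'; auto.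
Qed.

Lemma closed_lsc {X : BanachSpace} (g : X -> option R) z t0 :
  ~ (exists c, g z = Some c /\ c <= t0) -> exists t, t0 < t /\ ER_lt (Fin t) (ext (g z)).
Proof.
  intros H. destruct (g z) as [c|] eqn:E.
  - exists ((c + t0)/2). assert (t0 < c).
    { destruct (Rle_lt_dec c t0); auto. exfalso; apply H; eauto. }
    split; [lra|]. apply ER_lt_Fin_ext. lra.
  - exists (t0 + 1); split; [lra|]. apply ER_lt_Fin_ext. auto.
Qed.

Lemma inv_INR_le (n N : nat) : (0 < N)%nat -> (N <= n)%nat -> / INR n <= / INR N.
Proof.
  intros H1 H2. apply Rinv_le_contravar. apply lt_0_INR; auto. apply le_INR; auto.
Qed.

Lemma ekeland {X : BanachSpace} (g : X -> option R) (mu : R) (x0 : X) (r : R) :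
  0 < mu -> (forall y b, g y = Some b -> 0 <= b) -> lsc g -> g x0 = Some r ->
  exists z c, g z = Some c /\ c + mu * bs_norm (bs_sub z x0) <= r /\
    (forall y b, g y = Some b -> b + mu * bs_norm (bs_sub y z) <= c -> y = z).
Proof.
  intros Hmu Hpos Hlsc Hx0.
  set (P := fun (n : nat) (p q : X * R) =>
    g (fst p) = Some (snd p) ->
    g (fst q) = Some (snd q) /\ snd q + mu * bs_norm (bs_sub (fst q) (fst p)) <= snd p /\
    forall y' b', g y' = Some b' -> b' + mu * bs_norm (bs_sub y' (fst p)) <= snd p ->
      snd q <= b' + / INR (S n)).
  assert (HP : forall n p, exists q, P n p q).
  { intros n [x a]. destruct (classic (g x = Some a)) as [Hg|Hg].
    - destruct (near_inf g mu x a (/ INR (S n)) Hpos Hg) as [y [b [H1 [H2 H3]]]].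
      + apply Rinv_0_lt_compat, lt_0_INR; lia.
      + lra.
      + exists (y, b). intros _. simpl. auto.
    - exists (x, a). intros H; simpl in H; tauto. }
  set (step := fun n p => epsilon (inhabits (x0, r)) (P n p)).
  assert (Hstep : forall n p, P n p (step n p)).
  { intros n p. apply epsilon_spec, HP. }
  set (sq := fix sq (n : nat) : X * R := match n with O => (x0, r) | S k => step k (sq k) end).
  set (xs := fun n => fst (sq n)). set (a := fun n => snd (sq n)).
  assert (F0 : forall n, g (xs n) = Some (a n)).
  { induction n; [exact Hx0|]. apply (Hstep n (sq n) IHn). }
  assert (F1 : forall n, a (S n) + mu * bs_norm (bs_sub (xs (S n)) (xs n)) <= a n).
  { intros n. apply (Hstep n (sq n) (F0 n)). }
  assert (F2 : forall n y b, g y = Some b -> b + mu * bs_norm (bs_sub y (xs n)) <= a n ->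
      a (S n) <= b + / INR (S n)).
  { intros n. apply (Hstep n (sq n) (F0 n)). }
  set (In := fun n y => exists b, g y = Some b /\ b + mu * bs_norm (bs_sub y (xs n)) <= a n).
  assert (Nest : forall n y, In (S n) y -> In n y).
  { intros n y [b [H1 H2]]. exists b; split; auto.
    pose proof (F1 n). pose proof (norm_sub_tri y (xs (S n)) (xs n)). nra. }
  assert (NestK : forall k n y, In (k + n)%nat y -> In n y).
  { induction k; simpl; auto. }
  assert (Self : forall n, In n (xs n)).
  { intros n. exists (a n); split; auto. rewrite norm_sub_self. lra. }
  assert (F3 : forall n y, In (S n) y -> mu * bs_norm (bs_sub y (xs (S n))) <= / INR (S n)).
  { intros n y Hy. destruct Hy as [b [H1 H2]] eqn:EE.
    assert (In n y) as [b' [H1' H2']] by (apply Nest; exists b; auto).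
    pose proof (F2 n y b' H1' H2'). rewrite H1 in H1'. inversion H1'. subst. lra. }
  assert (F4 : forall n m, (S n <= m)%nat ->
      bs_norm (bs_sub (xs m) (xs (S n))) <= / (mu * INR (S n))).
  { intros n m Hm. assert (In (S n) (xs m)).
    { replace m with ((m - S n) + S n)%nat by lia. apply (NestK (m - S n)%nat), Self. }
    apply F3 in H. rewrite Rinv_mult.
    apply Rmult_le_reg_l with mu; auto. rewrite <- Rmult_assoc, Rinv_r, Rmult_1_l by lra. auto. }
  destruct (bs_complete X xs) as [z Hz].
  { intros e He.
    destruct (archimed_cor1 (e * mu / 2)) as [N [HN HN0]].
    { apply Rmult_lt_0_compat; [nra| lra]. }
    exists N. intros m k Hm Hk. destruct N as [|n]; [lia|].
    pose proof (F4 n m Hm). pose proof (F4 n k Hk).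
    pose proof (norm_sub_tri (xs m) (xs (S n)) (xs k)).
    rewrite (norm_sub_sym (xs (S n)) (xs k)) in H1.
    assert (/ (mu * INR (S n)) < e / 2).
    { rewrite Rinv_mult. apply Rmult_lt_reg_l with mu; auto.
      rewrite <- Rmult_assoc, Rinv_r, Rmult_1_l by lra. lra. }
    unfold bs_sub in *. lra. }
  assert (Zin : forall n, In n z).
  { intros n. apply NNPP; intros Hno.
    destruct (closed_lsc g z (a n - mu * bs_norm (bs_sub z (xs n)))) as [t [Ht1 Ht2]].
    { intros [c [H1 H2]]. apply Hno. exists c; split; auto; lra. }
    destruct (Hlsc z t Ht2) as [d [Hd Hd2]].
    destruct (Hz (Rmin d ((t - (a n - mu * bs_norm (bs_sub z (xs n)))) / mu))) as [N HN].
    { apply Rmin_glb_lt; auto. apply Rdiv_lt_0_compat; lra. }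
    set (m := (N + n)%nat).
    specialize (HN m ltac:(unfold m; lia)).
    assert (Hm1 : bs_norm (bs_sub (xs m) z) < d).
    { eapply Rlt_le_trans; [apply HN| apply Rmin_l]. }
    assert (Hm2 : mu * bs_norm (bs_sub (xs m) z) < t - (a n - mu * bs_norm (bs_sub z (xs n)))).
    { assert (bs_norm (bs_sub (xs m) z) < (t - (a n - mu * bs_norm (bs_sub z (xs n)))) / mu).
      { eapply Rlt_le_trans; [apply HN| apply Rmin_r]. }
      apply Rmult_lt_compat_l with (r := mu) in H; auto.
      unfold Rdiv in H. rewrite (Rmult_comm _ (/mu)), <- Rmult_assoc, Rinv_r, Rmult_1_l in H; lra. }
    specialize (Hd2 (xs m) Hm1).
    rewrite F0 in Hd2. apply ER_lt_Fin_ext in Hd2.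
    assert (In n (xs m)) as [b [Hb1 Hb2]].
    { unfold m. apply (NestK N), Self. }
    rewrite F0 in Hb1. inversion Hb1; subst b.
    pose proof (norm_sub_tri z (xs m) (xs n)). rewrite (norm_sub_sym z (xs m)) in H.
    nra. }
  destruct (Zin O) as [c [Hc1 Hc2]].
  exists z, c. split; auto. split; [exact Hc2|].
  intros y b Hy Hyb.
  apply norm_sub_eq0. apply NNPP; intros Hne.
  pose proof (norm_ge0 (bs_sub y z)) as Hge.
  set (d := bs_norm (bs_sub y z)) in *.
  assert (Hd : 0 < d) by lra.
  destruct (archimed_cor1 (mu * d / 2)) as [N [HN HN0]]; [nra|].
  destruct (Hz (d / 2)) as [N' HN']; [lra|].
  set (n := Nat.max N N').
  assert (In (S n) y).
  { destruct (Zin (S n)) as [c' [Hc1' Hc2']]. rewrite Hc1 in Hc1'. inversion Hc1'; subst c'.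
    exists b; split; auto. pose proof (norm_sub_tri y z (xs (S n))). fold d in H. nra. }
  apply F3 in H.
  pose proof (inv_INR_le (S n) N HN0 ltac:(unfold n; lia)).
  specialize (HN' (S n) ltac:(unfold n; lia)).
  pose proof (norm_sub_tri y (xs (S n)) z). fold d in H1.
  unfold bs_sub in HN', H1, H.
  assert (bs_norm (bs_add y (bs_opp (xs (S n)))) < d / 2) by (apply Rmult_lt_reg_l with mu; lra).
  lra.
Qed.

Lemma div_le_iff a b c : 0 < b -> (a / b <= c <-> a <= c * b).
Proof.
  intros Hb; split; intros H.
  - apply Rmult_le_compat_r with (r := b) in H; [|lra].
    unfold Rdiv in H. rewrite Rmult_assoc, Rinv_l, Rmult_1_r in H by lra. auto.
  - apply Rmult_le_reg_r with b; auto. unfold Rdiv. rewrite Rmult_assoc, Rinv_l, Rmult_1_r by lra. auto.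
Qed.

Lemma le_div_iff a b c : 0 < b -> (c <= a / b <-> c * b <= a).
Proof.
  intros Hb; split; intros H.
  - apply Rmult_le_compat_r with (r := b) in H; [|lra].
    unfold Rdiv in H. rewrite Rmult_assoc, Rinv_l, Rmult_1_r in H by lra. auto.
  - apply Rmult_le_reg_r with b; auto. unfold Rdiv. rewrite Rmult_assoc, Rinv_l, Rmult_1_r by lra. auto.
Qed.

Definition slope {X : BanachSpace} (f : X -> option R) (x : X) : ERbar :=
  ER_sup (fun w => exists h : X, bs_norm h <= 1 /\ w = ER_opp (dir_deriv f x h)).

Definition fplus {X : BanachSpace} (f : X -> option R) (y : X) : option R :=
  match f y with Some v => Some (Rmax v 0) | None => None end.

Lemma fplus_pos {X : BanachSpace} (f : X -> option R) y b : fplus f y = Some b -> 0 <= b.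
Proof. unfold fplus; destruct (f y); intros H; inversion H. apply Rmax_r. Qed.

Lemma lsc_fplus {X : BanachSpace} (f : X -> option R) : lsc f -> lsc (fplus f).
Proof.
  intros Hl x t Ht. destruct (Rlt_le_dec t 0) as [Hneg|Hnn].
  - exists 1; split; [lra|]. intros y _. apply ER_lt_Fin_ext. unfold fplus.
    destruct (f y); auto. pose proof (Rmax_r r 0); lra.
  - assert (ER_lt (Fin t) (ext (f x))).
    { apply ER_lt_Fin_ext. apply ER_lt_Fin_ext in Ht. unfold fplus in Ht.
      destruct (f x); auto. unfold Rmax in Ht. destruct (Rle_dec r 0); lra. }
    destruct (Hl x t H) as [d [Hd Hd2]]. exists d; split; auto.
    intros y Hy. specialize (Hd2 y Hy). apply ER_lt_Fin_ext in Hd2. apply ER_lt_Fin_ext.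
    unfold fplus. destruct (f y); auto. pose proof (Rmax_l r 0); lra.
Qed.

Lemma opp_lt a d : ER_lt (Fin a) (ER_opp d) -> ER_lt d (Fin (-a)).
Proof.
  destruct d as [v| |]; simpl.
  - intros H. apply ER_lt_Fin in H. apply ER_lt_Fin. lra.
  - intros [H _]; simpl in H; tauto.
  - intros _. split; simpl; auto. discriminate.
Qed.

Lemma core_B {X : BanachSpace} (f : X -> option R) mu mu' x v :
  lsc f -> convex_fun f -> 0 < mu' < mu ->
  (forall x r, f x = Some r -> 0 < r -> ER_le (Fin mu) (slope f x)) ->
  f x = Some v -> 0 < v ->
  exists z, sublevel0 f z /\ bs_norm (bs_sub x z) <= v / mu'.
Proof.
  intros Hl Hc Hmu Hsl Hx Hv.
  assert (Hgx : fplus f x = Some v).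
  { unfold fplus; rewrite Hx. f_equal. apply Rmax_left; lra. }
  destruct (ekeland (fplus f) mu' x v ltac:(lra) (fplus_pos f) (lsc_fplus f Hl) Hgx)
    as [z [c [Hz1 [Hz2 Hz3]]]].
  unfold fplus in Hz1. destruct (f z) as [fz|] eqn:Efz; [|discriminate].
  inversion Hz1 as [Ec]. clear Hz1.
  destruct (Rle_lt_dec fz 0) as [Hneg|Hposz].
  - rewrite Rmax_right in Ec by lra. subst c. exists z. split; [exists fz; auto|].
    rewrite norm_sub_sym. apply le_div_iff; lra.
  - exfalso. rewrite Rmax_left in Ec by lra. subst c.
    specialize (Hsl z fz Efz Hposz).
    destruct (classic (exists h, bs_norm h <= 1 /\ ER_lt (Fin mu') (ER_opp (dir_deriv f z h))))
      as [[h [Hh Hlt]]|Hno].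
    2: { assert (ER_le (slope f z) (Fin mu')).
         { apply ER_sup_spec. intros w [h [Hh ->]].
           destruct (classic (ER_le (ER_opp (dir_deriv f z h)) (Fin mu'))) as [|Hn]; auto.
           exfalso; apply Hno; exists h; split; auto. apply ER_not_le in Hn. exact Hn. }
         pose proof (ER_le_trans _ _ _ Hsl H). simpl in H0. lra. }
    apply opp_lt in Hlt.
    destruct (dir_deriv_spec f z h fz Hc Efz) as [Hlim _].
    destruct (lim_lt _ _ _ Hlim Hlt) as [d [Hd Hd2]].
    set (t := Rmin (d/2) (fz / (2 * mu'))).
    assert (Ht0 : 0 < t). { unfold t. apply Rmin_glb_lt; [lra|]. apply Rdiv_lt_0_compat; lra. }
    assert (Htd : t < d). { unfold t. eapply Rle_lt_trans; [apply Rmin_l| lra]. }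
    assert (Htf : mu' * t <= fz / 2).
    { assert (t <= fz / (2 * mu')) by (unfold t; apply Rmin_r).
      apply Rmult_le_compat_l with (r := mu') in H; [|lra].
      eapply Rle_trans; [apply H|]. right; field; lra. }
    specialize (Hd2 t (conj Ht0 Htd)). unfold diff_quot in Hd2.
    destruct (f (bs_add z (bs_scal t h))) as [fy|] eqn:Efy.
    2: { destruct Hd2 as [H _]; simpl in H; tauto. }
    apply ER_lt_Fin in Hd2.
    assert (Hfy : fy < fz - mu' * t).
    { assert ((fy - fz) / t * t < - mu' * t) by (apply Rmult_lt_compat_r; lra).
      unfold Rdiv in H. rewrite Rmult_assoc, Rinv_l, Rmult_1_r in H by lra. lra. }
    assert (Hn : bs_norm (bs_sub (bs_add z (bs_scal t h)) z) <= t).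
    { rewrite add_sub_l, bs_norm_scal, Rabs_pos_eq by lra.
      pose proof (norm_ge0 h). nra. }
    assert (E := Hz3 (bs_add z (bs_scal t h)) (Rmax fy 0)).
    unfold fplus in E. rewrite Efy in E. specialize (E eq_refl).
    assert (Rmax fy 0 + mu' * bs_norm (bs_sub (bs_add z (bs_scal t h)) z) <= fz).
    { assert (mu' * bs_norm (bs_sub (bs_add z (bs_scal t h)) z) <= mu' * t) by (apply Rmult_le_compat_l; lra).
      unfold Rmax; destruct (Rle_dec fy 0); lra. }
    specialize (E H). rewrite E, Efz in Efy. inversion Efy. assert (0 < mu' * t) by (apply Rmult_lt_0_compat; lra). lra.
Qed.

Lemma partB {X : BanachSpace} (f : X -> option R) mu :
  lsc f -> convex_fun f -> 0 < mu ->
  (forall x r, f x = Some r -> 0 < r -> ER_le (Fin mu) (slope f x)) ->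
  error_bound_const f (/ mu).
Proof.
  intros Hl Hc Hmu Hsl. split; [left; apply Rinv_0_lt_compat; auto|].
  intros x. destruct (f x) as [v|] eqn:Ex; auto.
  destruct (ER_inf_spec (fun v0 => exists s, sublevel0 f s /\ v0 = Fin (bs_norm (bs_sub x s)))) as [D1 D2].
  unfold dist_set. set (dd := ER_inf _) in *.
  destruct (Rle_lt_dec v 0) as [Hneg|Hpos].
  - rewrite Rmax_right by lra. rewrite Rmult_0_r.
    rewrite <- (norm_sub_self x). apply D1. exists x; split; auto. exists v; auto.
  - rewrite Rmax_left by lra.
    assert (Hb : forall mu', 0 < mu' < mu -> ER_le dd (Fin (v / mu'))).
    { intros mu' Hmu'. destruct (core_B f mu mu' x v Hl Hc Hmu' Hsl Ex Hpos) as [z [Hz1 Hz2]].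
      eapply ER_le_trans; [apply D1; exists z; split; eauto|]. simpl; auto. }
    destruct dd as [d| |] eqn:Edd; simpl; auto.
    + destruct (Rle_lt_dec d (/ mu * v)) as [|Hlt]; auto. exfalso.
      assert (Hd : 0 < d). { assert (0 < / mu * v) by (apply Rmult_lt_0_compat; [apply Rinv_0_lt_compat|]; lra). lra. }
      assert (Hmd : v < mu * d).
      { apply Rmult_lt_compat_l with (r := mu) in Hlt; auto.
        rewrite <- Rmult_assoc, Rinv_r, Rmult_1_l in Hlt by lra. lra. }
      set (mu' := (v / d + mu) / 2).
      assert (Hvd : v / d * d = v) by (field; lra).
      assert (Hvd2 : v / d < mu). { unfold Rdiv. apply Rmult_lt_reg_r with d; auto.
        rewrite Rmult_assoc, Rinv_l by lra. lra. }
      assert (0 < v / d) by (apply Rdiv_lt_0_compat; lra).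
      specialize (Hb mu' ltac:(unfold mu'; lra)). simpl in Hb.
      apply le_div_iff in Hb; [|unfold mu'; lra].
      unfold mu' in Hb. nra.
    + specialize (Hb (mu/2) ltac:(lra)). simpl in Hb. auto.
Qed.

Lemma slope_lb {X : BanachSpace} (f : X -> option R) x r s fs :
  convex_fun f -> f x = Some r -> 0 < r -> f s = Some fs -> fs <= 0 ->
  0 < bs_norm (bs_sub s x) /\ ER_le (Fin (r / bs_norm (bs_sub s x))) (slope f x).
Proof.
  intros Hc Hx Hr Hs Hfs.
  set (t := bs_norm (bs_sub s x)).
  assert (Ht : 0 < t).
  { pose proof (norm_ge0 (bs_sub s x)). destruct (Req_dec t 0) as [E|]; [|unfold t in *; lra].
    apply norm_sub_eq0 in E. subst s. rewrite Hx in Hs. inversion Hs. lra. }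
  split; auto.
  set (h := bs_scal (/ t) (bs_sub s x)).
  assert (Hh : bs_norm h <= 1).
  { unfold h. rewrite bs_norm_scal, Rabs_pos_eq by (left; apply Rinv_0_lt_compat; auto).
    fold t. rewrite Rinv_l by lra. lra. }
  assert (Hxt : bs_add x (bs_scal t h) = s).
  { unfold h. rewrite bs_scal_assoc, Rinv_r, bs_scal_one by lra. apply add_sub_cancel. }
  destruct (dir_deriv_spec f x h r Hc Hx) as [_ Hle].
  specialize (Hle t Ht). unfold diff_quot in Hle. rewrite Hxt, Hs in Hle.
  apply ER_opp_le in Hle.
  eapply ER_le_trans; [|apply (proj1 (ER_sup_spec _)); exists h; split; eauto].
  eapply ER_le_trans; [|exact Hle]. simpl.
  unfold Rdiv. apply Rle_trans with ((r - fs) * / t);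
    [apply Rmult_le_compat_r; [left; apply Rinv_0_lt_compat; auto| lra] | right; ring].
Qed.

Lemma partA {X : BanachSpace} (f : X -> option R) x r :
  convex_fun f -> (exists s, sublevel0 f s) -> f x = Some r -> 0 < r ->
  ER_le (ER_inv (K_f f)) (slope f x).
Proof.
  intros Hc [s0 [fs0 [Hs0 Hfs0]]] Hx Hr.
  destruct (slope_lb f x r s0 fs0 Hc Hx Hr Hs0 Hfs0) as [Ht0 Hb0].
  destruct (slope f x) as [sg| |] eqn:Esl.
  2: { destruct (ER_inv (K_f f)); simpl; auto. }
  2: { simpl in Hb0; tauto. }
  simpl in Hb0.
  assert (Hsg : 0 < sg).
  { eapply Rlt_le_trans; [|exact Hb0]. apply Rdiv_lt_0_compat; auto. }
  assert (Hd : forall s, sublevel0 f s -> r / sg <= bs_norm (bs_sub x s)).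
  { intros s [fs [Hs Hfs]]. destruct (slope_lb f x r s fs Hc Hx Hr Hs Hfs) as [Ht Hb].
    rewrite Esl in Hb. simpl in Hb. rewrite norm_sub_sym.
    apply div_le_iff; auto. apply div_le_iff in Hb; auto. lra. }
  assert (HK : ER_le (Fin (/ sg)) (K_f f)).
  { apply ER_inf_spec. intros k [K [-> [HK0 HK]]]. specialize (HK x). rewrite Hx in HK.
    rewrite Rmax_left in HK by lra.
    assert (ER_le (Fin (r / sg)) (dist_set (sublevel0 f) x)).
    { apply ER_inf_spec. intros v [s [Hs ->]]. simpl. apply Hd; auto. }
    pose proof (ER_le_trans _ _ _ H HK). simpl in H0. simpl.
    unfold Rdiv in H0. rewrite Rmult_comm in H0. apply Rmult_le_reg_r with r; auto. }
  destruct (K_f f) as [k| |]; simpl in HK |- *; auto.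
  - destruct (Req_EM_T k 0) as [E|E].
    + subst. pose proof (Rinv_0_lt_compat sg Hsg). lra.
    + simpl. rewrite <- (Rinv_inv sg). apply Rinv_le_contravar; auto.
      apply Rinv_0_lt_compat; auto.
  - lra.
  - lra.
Qed.

Lemma Kf_ge0 {X : BanachSpace} (f : X -> option R) : ER_le (Fin 0) (K_f f).
Proof. apply ER_inf_spec. intros k [K [-> [H _]]]. simpl; auto. Qed.

Theorem mainTheorem9 (X : BanachSpace) (f : X -> option R) :
  proper_fun f -> lsc f -> convex_fun f ->
  (exists x, sublevel0 f x) ->
  ER_inv (K_f f) = slope_inf f.
Proof.
  intros Hp Hl Hc HS.
  pose proof (ER_inf_spec (fun v => exists x r, f x = Some r /\ 0 < r /\
     v = ER_sup (fun w => exists h : X, bs_norm h <= 1 /\ w = ER_opp (dir_deriv f x h)))) as [M1 M2].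
  unfold slope_inf. set (m := ER_inf _) in *.
  apply ER_le_antisym.
  - apply M2. intros v [x [r [Hx [Hr ->]]]]. apply (partA f x r Hc HS Hx Hr).
  - apply NNPP; intros Hn. apply ER_not_le in Hn. destruct Hn as [Hn1 Hn2].
    assert (Hmu : exists mu, 0 < mu /\ ER_le (Fin mu) m /\ ER_lt (ER_inv (K_f f)) (Fin mu)).
    { pose proof (Kf_ge0 f) as Hk0.
      destruct (K_f f) as [k| |]; simpl in Hn1, Hn2, Hk0 |- *.
      - destruct (Req_EM_T k 0) as [E|E].
        + destruct m; simpl in *; try tauto; exfalso; auto.
        + assert (0 < / k) by (apply Rinv_0_lt_compat; lra).
          destruct m as [m0| |]; simpl in Hn1, Hn2 |- *; try tauto.
          * exists ((/k + m0)/2). assert (/k <> m0) by (intros E'; apply Hn2; subst; auto).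
            split; [lra|]; split; [simpl; lra|]; apply ER_lt_Fin; lra.
          * exists (/k + 1). split; [lra|]; split; [simpl; auto|]; apply ER_lt_Fin; lra.
      - destruct m as [m0| |]; simpl in Hn1, Hn2 |- *; try tauto.
        * assert (0 <> m0) by (intros E'; apply Hn2; subst; auto).
          exists (m0/2). split; [lra|]; split; [simpl; lra|]; apply ER_lt_Fin; lra.
        * exists 1. split; [lra|]; split; [simpl; auto|]; apply ER_lt_Fin; lra.
      - tauto. }
    destruct Hmu as [mu [Hmu0 [Hmu1 Hmu2]]].
    assert (HB : error_bound_const f (/ mu)).
    { apply partB; auto. intros x r Hx Hr. eapply ER_le_trans; [exact Hmu1|].
      apply M1. exists x, r; auto. }
    assert (ER_le (K_f f) (Fin (/ mu))).
    { apply ER_inf_spec. exists (/mu); auto. }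
    pose proof (Kf_ge0 f) as Hk0.
    destruct (K_f f) as [k| |]; simpl in H, Hmu2, Hk0.
    + destruct (Req_EM_T k 0) as [E|E]; [destruct Hmu2 as [Hm _]; simpl in Hm; tauto|].
      apply ER_lt_Fin in Hmu2.
      assert (0 < k) by lra.
      apply Rinv_le_contravar in H; auto. rewrite Rinv_inv in H. lra.
    + tauto.
    + tauto.
Qed.
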